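(* For each lattice $l$ and $t\in\mathbb{R}$ let $\Phi^l_t:X^l\to X^l$, $\Phi^l_t(q,v)=\big(q+[\,2t(d_ev_e)_{e\in l}\,],\,v\big)$, be the Hamiltonian flow of $H_l(q,v)=\sum_{e\in l}d_e\|v_e\|^2$. Then for every $t\in\mathbb{R}$ there is a well-defined map $\tau_t:A_0^\infty\to A_0^\infty$ such that $$\tau_t(f\circ\gamma_l)=(f\circ\Phi^l_t)\circ\gamma_l\qquad\text{for all } l\in\mathcal{L},\ f\in A_0^l;$$ in particular the C*-algebra $A_0^\infty$ is conserved by this time evolution.
   Context: Fix integers $n,D\ge1$. $G=\mathbb{T}^n=\mathbb{R}^n/\mathbb{Z}^n$; for a finite set $S$ and $x\in(\mathbb{R}^n)^S$, $[x]\in G^S$ is its class mod $(\mathbb{Z}^n)^S$. $B:=\{x\in\mathbb{R}^n:\|x\|<1/2\}$; $\cdot$ is the standard dot product. Lattices. A lattice is a finite set $l\subseteq\mathbb{R}^D\times\mathbb{R}^D$ of edges $e=(x,y)$ with $x<y$ lexicographically, distinct edges meeting at most at endpoints; $d_e=\|y-x\|$. $l\le m$ means every $e=(x_1,x_2)\in l$ is subdivided in $m$: there are $N\ge0$, $0<t_1<\dots<t_N<1$ with $y_0=x_1$, $y_s=(1-t_s)x_1+t_sx_2$, $y_{N+1}=x_2$, and all pieces $e_s=(y_{s-1},y_s)\in m$. $\mathcal{L}$ = set of lattices, directed by $\le$. Maps. For $l\le m$: $\gamma^{\mathrm{conf}}_{lm}(q)_e=\sum_s q_{e_s}$ ($G^m\to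 G^l$), $\gamma^{\mathrm{mom}}_{lm}(v)_e=\sum_s\frac{d_{e_s}}{d_e}v_{e_s}$, $\gamma_{lm}=(\gamma^{\mathrm{conf}}_{lm},\gamma^{\mathrm{mom}}_{lm}):X^m\to X^l$ where $X^l:=G^l\times(\mathbb{R}^n)^l$; $X^\infty=\varprojlim X^l$ with projections $\gamma_l:X^\infty\to X^l$. Algebras. $\mathcal{A}_0^l$ is the span of the functions $([x],v)\mapsto e^{2\pi ib\cdot x}e^{i\xi\cdot v}g(P_Vv)$ on $X^l$ ($b\in(\mathbb{Z}^n)^l$, $\xi\in(\mathbb{R}^n)^l$, $V$ a linear subspace of $(\mathbb{R}^n)^l$ with orthogonal projection $P_V$, $g\in\mathcal{S}(V)$ with compactly supported smooth Fourier transform); $A_0^l$ is its closure in the sup norm. $\mathcal{A}_0^\infty:=\{f\circ\gamma_l:l\in\mathcal{L},f\in\mathcal{A}_0^l\}\subseteq C_b(X^\infty)$ and $A_0^\infty$ is its sup-norm closure (which contains $f\circ\gamma_l$ for all $f\in A_0^l$). *)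

(* Defs.v *)
From HB Require Import structures.
From mathcomp Require Import all_boot all_order all_algebra.
From mathcomp Require Import finmap complex.
From mathcomp Require Import all_classical all_reals all_analysis.

Set Implicit Arguments.
Unset Strict Implicit.
Unset Printing Implicit Defensive.
Import Order.TTheory GRing.Theory Num.Theory.
Import numFieldNormedType.Exports.
Local Open Scope ring_scope.
Local Open Scope complex_scope.

Section Defs.
Context {R : realType}.
Local Notation C := (R[i]).

Definition dotr {k : nat} (x y : 'rV[R]_k) : R := \sum_i x 0 i * y 0 i.
Definition enorm {k : nat} (x : 'rV[R]_k) : R := Num.sqrt (dotr x x).
Definition expi (th : R) : C := (cos th) +i* (sin th).

Definition pderiv {k : nat} (i : 'I_k) (f : 'rV[R]_k -> R) : 'rV[R]_k -> R :=
  fun x => 'D_(delta_mx 0 i) f x.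
Definition iter_pderiv {k : nat} (s : seq 'I_k) (f : 'rV[R]_k -> R) :=
  foldr pderiv f s.
Definition smoothR {k : nat} (f : 'rV[R]_k -> R) : Prop :=
  forall s : seq 'I_k, continuous (iter_pderiv s f) /\
    forall x (i : 'I_k), derivable (iter_pderiv s f) x (delta_mx 0 i).
Definition smoothC {k : nat} (f : 'rV[R]_k -> C) : Prop :=
  smoothR (fun x => complex.Re (f x)) /\ smoothR (fun x => complex.Im (f x)).
Definition rapid_decay {k : nat} (f : 'rV[R]_k -> R) : Prop :=
  forall (s : seq 'I_k) (m : nat), exists M : R,
    forall x, (1 + enorm x) ^+ m * `|iter_pderiv s f x| <= M.
Definition schwartz {k : nat} (h : 'rV[R]_k -> C) : Prop :=
  smoothC h /\ rapid_decay (fun x => complex.Re (h x))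
            /\ rapid_decay (fun x => complex.Im (h x)).

Fixpoint iint (k : nat) : ('rV[R]_k -> R) -> R :=
  match k return ('rV[R]_k -> R) -> R with
  | 0 => fun F => F 0
  | k'.+1 => fun F =>
      Rintegral (@lebesgue_measure R) setT
        (fun x : R => iint (fun y : 'rV[R]_k' => F (row_mx (x%:M : 'rV[R]_1) y)))
  end.
Definition intC {k : nat} (F : 'rV[R]_k -> C) : C :=
  (iint (fun x => complex.Re (F x))) +i* (iint (fun x => complex.Im (F x))).
Definition fourier {k : nat} (h : 'rV[R]_k -> C) : 'rV[R]_k -> C :=
  fun xi => intC (fun x => h x * expi (- dotr xi x)).
Definition compact_support {k : nat} (f : 'rV[R]_k -> C) : Prop :=
  exists r : R, forall x, r < enorm x -> f x = 0.
Definition admissible {k : nat} (h : 'rV[R]_k -> C) : Prop :=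
  schwartz h /\ smoothC (fourier h) /\ compact_support (fourier h).

(* ---------- the torus T^n = R^n / Z^n (canonical representatives in [0,1)^n) ---------- *)
Definition frac (r : R) : R := r - (Num.floor r)%:~R.
Lemma frac_in (r : R) : (0 <= frac r) && (frac r < 1).
Proof.
apply/andP; split; first by rewrite subr_ge0 floor_le.
by rewrite ltrBlDr addrC -[1]/(1%:~R) -intrD floorD1_gt.
Qed.

Variable n : nat.
Definition torus := {x : 'rV[R]_n | [forall i, (0 <= x 0 i) && (x 0 i < 1)]}.
Definition tproj (x : 'rV[R]_n) : torus.
Proof.
exists (map_mx frac x); apply/forallP => i; rewrite mxE; exact: frac_in.
Defined.
Definition tadd (a : torus) (x : 'rV[R]_n) : torus := tproj (val a + x).

Variable D : nat.
Definition edge := ('rV[R]_D * 'rV[R]_D)%type.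
Definition lexlt (x y : 'rV[R]_D) : Prop :=
  exists i : 'I_D, (forall j : 'I_D, (j < i)%N -> x 0 j = y 0 j) /\ x 0 i < y 0 i.
Definition seg (x y : 'rV[R]_D) : set 'rV[R]_D :=
  [set z | exists t : R, 0 <= t <= 1 /\ z = (1 - t) *: x + t *: y].
Definition is_lattice (l : {fset edge}) : Prop :=
  (forall e, e \in l -> lexlt e.1 e.2) /\
  (forall e e', e \in l -> e' \in l -> e <> e' ->
     forall z, seg e.1 e.2 z -> seg e'.1 e'.2 z ->
       (z = e.1 \/ z = e.2) /\ (z = e'.1 \/ z = e'.2)).
Definition lattice := {l : {fset edge} | is_lattice l}.
Definition lat (L : lattice) : {fset edge} := proj1_sig L.
Definition dlen (e : edge) : R := enorm (e.2 - e.1).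

(* subdivision of e = (x1,x2) at 0 < t_1 < ... < t_N < 1 : pieces e_1..e_{N+1} *)
Definition subdiv_pts (e : edge) (ts : seq R) : seq 'rV[R]_D :=
  rcons (map (fun t => (1 - t) *: e.1 + t *: e.2) ts) e.2.
Definition pieces (e : edge) (ts : seq R) : seq edge :=
  pairmap pair e.1 (subdiv_pts e ts).
Definition valid_subdiv (m : {fset edge}) (e : edge) (ts : seq R) : Prop :=
  sorted <%R ts /\ all (fun t => (0 < t) && (t < 1)) ts /\
  all (fun p => p \in m) (pieces e ts).
Definition lattice_le (l m : {fset edge}) : Prop :=
  forall e, e \in l -> exists ts, valid_subdiv m e ts.
(* the (unique, when l <= m) subdivision of e in m *)
Definition ts_of (m : {fset edge}) (e : edge) : seq R :=
  xget [::] (valid_subdiv m e).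
Definition pieces_in (m : {fset edge}) (e : edge) : seq edge :=
  pieces e (ts_of m e).

Definition Xl (l : {fset edge}) := ((l -> torus) * (l -> 'rV[R]_n))%type.

Definition extm (m : {fset edge}) (V : zmodType) (q : m -> V) (e : edge) : V :=
  if insub e is Some e' then q e' else 0.

Definition gamma (l m : {fset edge}) (X : Xl m) : Xl l :=
  (fun e : l => tproj (\sum_(p <- pieces_in m (val e))
                          extm (fun e' : m => val (X.1 e')) p),
   fun e : l => \sum_(p <- pieces_in m (val e))
                   (dlen p / dlen (val e)) *: extm X.2 p).

Definition Xinf :=
  {x : forall L : lattice, Xl (lat L) |
     forall L M : lattice, lattice_le (lat L) (lat M) ->
       gamma (lat L) (x M) = x L}.
Definition gammainf (L : lattice) (x : Xinf) : Xl (lat L) := proj1_sig x L.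

Definition dotl {l : {fset edge}} (v w : l -> 'rV[R]_n) : R :=
  \sum_(e : l) dotr (v e) (w e).
Definition dotb {l : {fset edge}} (b : l -> 'rV[int]_n) (x : l -> torus) : R :=
  \sum_(e : l) \sum_(i : 'I_n) (b e 0 i)%:~R * val (x e) 0 i.

(* generators  ([x],v) |-> e^{2 pi i b.x} e^{i xi.v} g(P_V v), with V spanned by the
   orthonormal family u and g(w) = h(coordinates of w in u) *)
Definition generator (l : {fset edge}) (f : Xl l -> C) : Prop :=
  exists (b : l -> 'rV[int]_n) (xi : l -> 'rV[R]_n) (k : nat)
         (u : 'I_k -> l -> 'rV[R]_n) (h : 'rV[R]_k -> C),
    (forall i j, dotl (u i) (u j) = (i == j)%:R) /\ admissible h /\
    f = fun X => expi (2 * pi * dotb b X.1) * expi (dotl xi X.2)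
                 * h (\row_i dotl (u i) X.2).

Definition spanC (T : Type) (S : (T -> C) -> Prop) (f : T -> C) : Prop :=
  exists (N : nat) (c : 'I_N -> C) (g : 'I_N -> T -> C),
    (forall i, S (g i)) /\ f = fun x => \sum_i c i * g i x.
Definition sup_closure (T : Type) (S : (T -> C) -> Prop) (f : T -> C) : Prop :=
  forall eps : R, 0 < eps -> exists g, S g /\ forall x, `|f x - g x| <= eps%:C.

Definition A0l (l : {fset edge}) := sup_closure (spanC (@generator l)).
Definition A0inf_pre (F : Xinf -> C) : Prop :=
  exists (L : lattice) (f : Xl (lat L) -> C),
    spanC (@generator (lat L)) f /\ F = f \o gammainf L.
Definition A0inf := sup_closure A0inf_pre.

Definition Phi (l : {fset edge}) (t : R) (X : Xl l) : Xl l :=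
  (fun e => tadd (X.1 e) ((2 * t * dlen (val e)) *: X.2 e), X.2).

End Defs.

(* Main.v *)
Require Import Defs.
From HB Require Import structures.
From mathcomp Require Import all_boot all_order all_algebra.
From mathcomp Require Import finmap complex.
From mathcomp Require Import all_classical all_reals all_analysis.
From mathcomp Require Import ring lra.
Set Implicit Arguments. Unset Strict Implicit. Unset Printing Implicit Defensive.
Import Order.TTheory GRing.Theory Num.Theory.
Import numFieldNormedType.Exports.
Local Open Scope ring_scope.
Local Open Scope complex_scope.
Section H.
Variable R : realType.
Variables n D : nat.

Definition intv (x : 'rV[R]_n) := forall i, x 0 i \is a Num.int.

Lemma frac_diff (r : R) : r - Defs.frac r \is a Num.int.
Proof. by rewrite /Defs.frac opprB addrC subrK intr_int. Qed.

Lemma tproj_eq (x y : 'rV[R]_n) : intv (x - y) -> tproj x = tproj y.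
Proof.
move=> H; apply: val_inj => /=; apply/matrixP => i j.
rewrite !mxE (ord1 i).
have := H j; rewrite !mxE => Hk.
have -> : x 0 j = y 0 j + (x 0 j - y 0 j) by rewrite addrC subrK.
rewrite /Defs.frac floorDrz // intrD.
move: Hk; rewrite intrEfloor => /eqP ->.
by rewrite opprD addrACA subrr addr0.
Qed.

Lemma intvD x y : intv x -> intv y -> intv (x + y).
Proof. by move=> hx hy i; rewrite mxE rpredD. Qed.
Lemma intvN x : intv x -> intv (- x).
Proof. by move=> hx i; rewrite mxE rpredN. Qed.
Lemma intv0 : intv 0.
Proof. by move=> i; rewrite mxE. Qed.
Lemma intv_sum (T : Type) (s : seq T) (F : T -> 'rV[R]_n) :
  (forall x, intv (F x)) -> intv (\sum_(p <- s) F p).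
Proof.
move=> H; elim: s => [|a s IH]; first by rewrite big_nil; exact: intv0.
by rewrite big_cons; apply: intvD.
Qed.

Lemma val_tproj (x : 'rV[R]_n) : intv (x - val (tproj x)).
Proof. by move=> i; rewrite !mxE frac_diff. Qed.

Lemma val_tadd (a : torus n) x : intv (val a + x - val (tadd a x)).
Proof. exact: val_tproj. Qed.
Lemma dlen_neq0 (L : @lattice R D) (e : edge D) : e \in lat L -> dlen e != 0.
Proof.
case: L => l [H1 _] /= /H1 [i [_ hi]].
rewrite /dlen /enorm sqrtr_eq0 -ltNge /dotr.
rewrite (bigD1 i) //= ltr_pwDl //.
  by rewrite !mxE -expr2 exprn_gt0 // subr_gt0.
by apply: sumr_ge0 => j _; rewrite -expr2 sqr_ge0.
Qed.
Lemma zmod_aux (V : zmodType) (a v w s : V) : a - (v + w) = a - (s + w) + (s - v).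
Proof. by rewrite addrA [a - (s + w) + s]addrAC [in RHS]opprD !addrA addrK opprD addrA addrAC. Qed.

Lemma Phi_gamma (L : @lattice R D) (m : {fset edge D}) (t : R) (X : Xl n m) :
  gamma (lat L) (Phi t X) = Phi t (gamma (lat L) X).
Proof.
rewrite /gamma /Phi /=; congr pair; apply: funext => e /=.
rewrite /tadd; apply: tproj_eq.
set A := \sum_(p <- _) _.
set S := \sum_(p <- _) extm (fun e' : m => val (X.1 e')) p.
set V := val (tproj S).
set w := _ *: _.
have -> : A - (V + w) = (A - (S + w)) + (S - V).
  exact: zmod_aux.
apply: intvD; last exact: val_tproj.
have hde : dlen (val e) != 0 by apply: (dlen_neq0 (fsvalP e)).
have -> : w = \sum_(p <- pieces_in m (val e)) (2 * t * dlen p) *: extm X.2 p.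
  rewrite /w scaler_sumr; apply: eq_bigr => p _; rewrite scalerA; congr (_ *: _).
  by field.
rewrite /A /S -big_split /= -sumrB; apply: intv_sum => p.
rewrite /extm; case: insubP => [e' _ <-|_]; last first.
  by rewrite scaler0 !addr0 subr0; exact: intv0.
have h := intvN (val_tadd (X.1 e') ((2 * t * dlen (val e')) *: X.2 e')).
rewrite opprB in h; exact h.
Qed.
Lemma expiD (a b : R) : expi (a + b) = expi a * expi b.
Proof.
rewrite /expi cosD sinD; apply/eqP; rewrite eq_complex /=.
by apply/andP; split; apply/eqP; lra.
Qed.

Lemma periodicz (f : R -> R) (T : R) : periodic f T -> forall z a, f (a + T *~ z) = f a.
Proof.
move=> hf [m|m] a; first by rewrite -pmulrn periodicn.
rewrite NegzE mulrNz -pmulrn.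
by rewrite -(periodicn hf m.+1 (a - T *+ m.+1)) subrK.
Qed.

Lemma expi_int (a k : R) : k \is a Num.int -> expi (a + 2 * pi * k) = expi a.
Proof.
rewrite intrEfloor => /eqP <-.
have -> : 2 * (pi : R) * (Num.floor k)%:~R = ((pi : R) *+ 2) *~ Num.floor k.
  by rewrite mulrzr mulr_natl.
by rewrite /expi (periodicz (@cosD2pi R)) (periodicz (@sinD2pi R)).
Qed.
Lemma gen_Phi (l : {fset edge D}) (t : R) (f : Xl n l -> R[i]) :
  generator f -> generator (f \o Phi t).
Proof.
case=> b [xi [k [u [h [hu [hh ->]]]]]].
pose c := fun e : l => 2 * t * dlen (val e).
pose ex := fun e : l => (2 * pi * c e) *: map_mx (fun z : int => z%:~R : R) (b e).
exists b, (fun e => xi e + ex e), k, u, h; split => //; split => //.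
apply: funext => X /=.
pose Sg := \sum_(e : l) \sum_(i : 'I_n) (b e 0 i)%:~R * (c e * X.2 e 0 i).
pose K := dotb b (Phi t X).1 - dotb b X.1 - Sg.
have hK : K \is a Num.int.
  rewrite /K /dotb /Sg -!sumrB; apply: rpred_sum => e _.
  rewrite -!sumrB; apply: rpred_sum => i _.
  rewrite -!mulrBr rpredM ?intr_int //.
  rewrite !mxE.
  set a := \val (X.1 e) 0 i; set x := c e * X.2 e 0 i.
  have -> : Defs.frac (a + x) - a - x = - ((a + x) - Defs.frac (a + x)) by ring.
  by rewrite rpredN frac_diff.
have hex : dotl ex X.2 = 2 * pi * Sg.
  rewrite /dotl /Sg mulr_sumr; apply: eq_bigr => e _.
  rewrite /dotr mulr_sumr; apply: eq_bigr => i _.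
  rewrite !mxE; ring.
have hxi : dotl (fun e => xi e + ex e) X.2 = dotl xi X.2 + dotl ex X.2.
  rewrite /dotl -big_split; apply: eq_bigr => e _.
  rewrite /dotr -big_split; apply: eq_bigr => i _.
  by rewrite !mxE /= mulrDl.
have E : 2 * pi * dotb b (Phi t X).1 = (2 * pi * dotb b X.1 + dotl ex X.2) + 2 * pi * K.
  rewrite hex /K; ring.
move: E; rewrite /Phi /= => ->.
rewrite expi_int // hxi !expiD; ring.
Qed.
End H.
Definition Pinf (R : realType) (n D : nat) (t : R) (x : @Xinf R n D) : @Xinf R n D.
Proof.
exists (fun L => Phi t (proj1_sig x L)).
move=> L M hLM; by rewrite Phi_gamma (proj2_sig x L M hLM).
Defined.

Lemma span_Phi (R : realType) (n D : nat) (l : {fset edge D}) (t : R) (f : @Xl R n D l -> R[i]) :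
  spanC (@generator R n D l) f -> spanC (@generator R n D l) (f \o Phi t).
Proof.
case=> N [c [g [hg ->]]]; exists N, c, (fun i => g i \o Phi t); split => //.
by move=> i; apply: gen_Phi.
Qed.

Theorem mainTheorem4 (R : realType) (n D : nat) (hn : (0 < n)%N) (hD : (0 < D)%N)
  (t : R) :
  exists tau : (@Xinf R n D -> R[i]) -> (@Xinf R n D -> R[i]),
    (forall F, @A0inf R n D F -> @A0inf R n D (tau F)) /\
    (forall (L : @lattice R D) (f : @Xl R n D (lat L) -> R[i]),
        A0l f -> tau (f \o gammainf L) = (f \o Phi t) \o gammainf L).
Proof.
exists (fun F => F \o Pinf t); split; last by [].
move=> F hF eps heps; have [g [[L [f [hf ->]]] hb]] := hF eps heps.
exists ((f \o gammainf L) \o Pinf t); split; last by move=> x; apply: hb.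
by exists L, (f \o Phi t); split; [apply: span_Phi|].
Qed.
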